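(* For every simple graph $\Gamma$ on $[n]$ and every $m\in\mathbb{N}$, the weighted integer points enumerator of the $m$-graph polytope equals the image of the $1$-uniform decorated graph under the universal morphism: $F_q(Q_{\Gamma,m})=\Psi^m_q(\Gamma^{\mathbf 1})$.
   Context: Let $\Gamma=([n],E)$ be a simple graph and $m\in\mathbb{N}$. For $S\subseteq[n]$ let $\Delta_S=\mathrm{conv}\{e_s: s\in S\}$. Let $\mathsf{H}_m(\Gamma)=\{S\subseteq[n]: |S|\le m+1,\ \Gamma|_S \text{ connected}\}$ and define the $m$-graph polytope $Q_{\Gamma,m}=\sum_{S\in\mathsf{H}_m(\Gamma)}\Delta_S$. Faces of the permutohedron $Pe^{n-1}$ are identified with flags $\mathcal{F}:\emptyset=F_0\subset F_1\subset\cdots\subset F_k=[n]$; $M_\mathcal{F}$ denotes the monomial quasisymmetric function $M_{\alpha}$ with $\alpha=(|F_1|-|F_0|,\ldots,|F_k|-|F_{k-1}|)$, and $L(Pe^{n-1})$ the set of all such flags. For a hypergraph $\mathsf{H}$ on $[n]$, restriction is $\mathsf{H}|_F=\{H\in\mathsf{H}: H\subseteq F\}$, contraction is $\mathsf{H}/F=\{H\setminus F: H\in\mathsf{H}\}$, $\mathsf{H}/\mathcal{F}=\bigsqcup_{i=1}^k(\mathsf{H}|_{F_i})/F_{i-1}$, and $\mathsf{rk}(\mathsf{H}/\mathcal{F})=n-c(\mathsf{H}/\mathcal{F})$ with $c$ the number of connected components. The weighted integer points enumerator is $F_q(Q_{\mathsf{H}})=\sum_{\mathcal{F}\in L(Pe^{n-1})}q^{\mathsf{rk}(\mathsf{H}/\mathcal{F})}M_\mathcal{F}$,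 and $F_q(Q_{\Gamma,m})=F_q(Q_{\mathsf{H}_m(\Gamma)})$. A decorated graph $\Gamma^w=([n],E,w)$ has edge decoration $w:E\to\mathbb{N}$; $\Gamma^{\mathbf 1}$ is the decorated graph with $w\equiv 1$. The ripping $\Gamma^w|_S$ is the induced decorated subgraph on $S$; the sewing $\Gamma^w/S$ is the induced subgraph on $[n]\setminus S$ together with additional edges $uv$ for all $u,v\in[n]\setminus S$ joined by an edge path whose interior vertices lie in $S$, decorated by the minimal sum of decorations over such paths. $\mathrm{pr}_m$ deletes all edges with decoration greater than $m$. The graded Hopf algebra $\mathcal{G}^{W,m}$ on isomorphism classes of decorated graphs has product disjoint union and coproduct $\Delta_m(\Gamma^w)=\sum_{S\subseteq[n]}\mathrm{pr}_m(\Gamma^w|_S)\otimes\mathrm{pr}_m(\Gamma^w/S)$; with character $\zeta_q(\Gamma^w)=q^{n-c(\Gamma^w)}$ it is a combinatorial Hopf algebra, and $\Psi^m_q:(\mathcal{G}^{W,m},\zeta_q)\to(\mathcal{Q}Sym,\zeta)$ is the unique morphism of combinatorial Hopf algebras (Aguiar–Bergeron–Sottile). Explicitly, $\Psi^m_q(\Gamma^w)=\sum_{\mathcal{F}\in L(Pe^{n-1})}q^{\mathsf{rk}_m(\Gamma^w/\mathcal{F})}M_\mathcal{F}$, where $\mathsf{rk}_m(\Gamma^w/\mathcal{F})=n-\sum_{i=1}^k c(\mathrm{pr}_m(\Gamma^w|_{F_i}/F_{i-1}))$. *)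

(* Defs.v *)
From HB Require Import structures.
From mathcomp Require Import all_boot all_order all_algebra.
From mathcomp Require Import boolp.
Set Implicit Arguments. Unset Strict Implicit. Unset Printing Implicit Defensive.
Import GRing.Theory.
Local Open Scope ring_scope.

(* ---------- Flags of [n] (faces of the permutohedron) ----------
   A flag  0 = F_0 < F_1 < ... < F_k = [n]  is encoded by the map
   f : [n] -> {0..n-1} sending v to the (0-based) index i of the block
   F_{i+1} \ F_i containing v; the image of f must be an initial segment
   {0,...,k-1}.  This is a bijection between flags and such maps. *)
Definition is_flag n (f : {ffun 'I_n -> 'I_n}) : bool :=
  [forall v, forall j : 'I_n, (j < f v)%N ==> [exists u, f u == j]].

Definition nblocks n (f : {ffun 'I_n -> 'I_n}) : nat := #|[set f v | v : 'I_n]|.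

Definition flagset n (f : {ffun 'I_n -> 'I_n}) (i : nat) : {set 'I_n} :=
  [set v | (f v < i)%N].

Definition flag_comp n (f : {ffun 'I_n -> 'I_n}) : seq nat :=
  [seq #|[set v | val (f v) == i]| | i <- iota 0 (nblocks f)].

Definition hadj n (H : {set {set 'I_n}}) : rel 'I_n :=
  fun u v => [exists h in H, (u \in h) && (v \in h)].

Definition hyp_ncomp n (H : {set {set 'I_n}}) : nat :=
  #|[set [set v | connect (hadj H) u v] | u : 'I_n]|.

(* H / F = disjoint union over i of (H|_{F_{i+1}}) / F_i  (0-based blocks) *)
Definition hcontr_flag n (H : {set {set 'I_n}}) (f : {ffun 'I_n -> 'I_n})
  : {set {set 'I_n}} :=
  [set h :\: flagset f (val i) | h : {set 'I_n} in H, i : 'I_n in [set: 'I_n]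
     & ((val i < nblocks f)%N && (h \subset flagset f (val i).+1))].

Definition hrk n (H : {set {set 'I_n}}) (f : {ffun 'I_n -> 'I_n}) : nat :=
  (n - hyp_ncomp (hcontr_flag H f))%N.

(* Quasisymmetric functions are represented by their coefficient vectors in
   the monomial basis M_alpha: a map  alpha |-> coefficient in Z[q]. *)
Definition QSymq := seq nat -> {poly int}.

Definition Fq_hyp n (H : {set {set 'I_n}}) : QSymq :=
  fun alpha => \sum_(f : {ffun 'I_n -> 'I_n} | is_flag f && (flag_comp f == alpha))
                  'X^(hrk H f).

(* simple graph on [n]: symmetric irreflexive e : rel 'I_n *)
Definition restr_rel n (e : rel 'I_n) (S : {set 'I_n}) : rel 'I_n :=
  fun u v => [&& u \in S, v \in S & e u v].

Definition connectedb n (e : rel 'I_n) (S : {set 'I_n}) : bool :=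
  (S != set0) && [forall u in S, forall v in S, connect (restr_rel e S) u v].

Definition Hm n (e : rel 'I_n) (m : nat) : {set {set 'I_n}} :=
  [set S : {set 'I_n} | (#|S| <= m.+1)%N && connectedb e S].

Definition Fq_graph n (e : rel 'I_n) (m : nat) : QSymq := Fq_hyp (Hm e m).

(* ---------- Decorated graphs: (e, w) with w the edge decoration ---------- *)
(* Edge uv of pr_m(Gamma^w|_F / G) (G subset of F): u, v in F \ G distinct,
   joined in Gamma|_F by an edge path whose interior vertices lie in G, and
   whose decoration (minimal sum over such paths) is <= m, i.e. some such
   path has decoration sum <= m. *)
Definition sewn_edge n (e : rel 'I_n) (w : 'I_n -> 'I_n -> nat) (m : nat)
  (F G : {set 'I_n}) (u v : 'I_n) : Prop :=
  [/\ u \in F :\: G, v \in F :\: G, u != v &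
   exists p : seq 'I_n,
     [/\ (p != [::]) && path e u p, last u p = v,
         all (fun x => x \in F) (u :: p),
         all (fun x => x \in G) (take (size p).-1 p) &
         (\sum_(xy <- zip (u :: p) p) w xy.1 xy.2 <= m)%N]].

(* number of connected components of a graph with edge relation r on the
   vertex set A (r relates only vertices of A) *)
Definition ncomp_on n (A : {set 'I_n}) (r : rel 'I_n) : nat :=
  #|[set [set v | connect r u v] | u in A]|.

Definition rk_m n (e : rel 'I_n) (w : 'I_n -> 'I_n -> nat) (m : nat)
  (f : {ffun 'I_n -> 'I_n}) : nat :=
  (n - \sum_(i < n | (i < nblocks f)%N)
         ncomp_on (flagset f i.+1 :\: flagset f i)
           (fun u v => `[< sewn_edge e w m (flagset f i.+1) (flagset f i) u v >]))%N.

Definition Psi n (e : rel 'I_n) (w : 'I_n -> 'I_n -> nat) (m : nat) : QSymq :=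
  fun alpha => \sum_(f : {ffun 'I_n -> 'I_n} | is_flag f && (flag_comp f == alpha))
                  'X^(rk_m e w m f).

(* Main.v *)
Require Import Defs.
From mathcomp Require Import all_boot all_order all_algebra.
From mathcomp Require Import boolp.
From mathcomp Require Import zify.

Section S.
Variables (n m : nat) (e : rel 'I_n) (e_sym : symmetric e) (e_irr : irreflexive e).
Variable (f : {ffun 'I_n -> 'I_n}).
Hypothesis fF : is_flag f.

Lemma inB (i : nat) v : (v \in flagset f i.+1 :\: flagset f i) = (val (f v) == i).
Proof. by rewrite !inE ltnS -leqNgt andbC -eqn_leq. Qed.

Lemma flag_lt v : (f v < nblocks f)%N.
Proof.
rewrite /nblocks.
pose g := @widen_ord _ n (ltn_ord (f v)).
have sub : [set g j | j : 'I_(f v).+1] \subset [set f x | x : 'I_n].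
  apply/subsetP => _ /imsetP [j _ ->].
  have : (val j <= f v)%N by rewrite -ltnS ltn_ord.
  rewrite leq_eqVlt => /orP [/eqP hj | lt].
    have -> : g j = f v by apply: val_inj.
    by apply: imset_f.
  move/forallP: fF => /(_ v) /forallP /(_ (g j)) /implyP /(_ lt) /existsP [u /eqP <-].
  by apply: imset_f.
have := subset_leq_card sub.
rewrite card_imset ?card_ord //.
by move=> a b /(congr1 val) /= /val_inj.
Qed.

Definition rr (i : nat) : rel 'I_n := fun u v =>
  `[< sewn_edge e (fun _ _ => 1%N) m (flagset f i.+1) (flagset f i) u v >].

Lemma seg (i : nat) : forall p x, path e x p -> val (f x) == i ->
  all (fun z => z \in flagset f i.+1) p -> val (f (last x p)) == i ->
  (size p <= m)%N -> connect (rr i) x (last x p).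
Proof.
move=> p; have [k] := ubnP (size p); elim: k p => [//|k IH] p szp x.
case: p szp => [|y p'] szp; first by move=> *; apply: connect0.
set p := y :: p'.
move=> pth fx allp fl szm.
pose P := fun z : 'I_n => z \notin flagset f i.
have hasp : has P p.
  apply/hasP; exists (last x p).
    by rewrite /p /=; apply: mem_last.
  by rewrite /P inE -leqNgt (eqP fl).
set k0 := find P p.
have lt : (k0 < size p)%N by rewrite /k0 -has_find.
set q := take k0.+1 p; set p2 := drop k0.+1 p.
have ep : p = q ++ p2 by rewrite cat_take_drop.
have szq : size q = k0.+1 by rewrite size_takel.
have zq : last x q = nth x p k0.
  by rewrite (last_nth x) szq /= nth_take.
have Pz : P (last x q) by rewrite zq; apply: nth_find.
have fz : val (f (last x q)) == i.
  rewrite -inB inE; move: Pz; rewrite /P => -> /=.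
  have : last x q \in p by rewrite zq mem_nth.
  by move: (allP allp) => h /h.
move: pth allp; rewrite ep cat_path all_cat => /andP [pq pp2] /andP [aq ap2].
have c1 : connect (rr i) x (last x q).
  have [->|ne] := eqVneq x (last x q); first by apply: connect0.
  apply: connect1; apply/asboolP; split.
  - by rewrite inB.
  - by rewrite inB.
  - exact: ne.
  exists q; split.
  - by rewrite pq -size_eq0 szq.
  - by [].
  - rewrite /=; apply/andP; split; last exact: aq.
    by rewrite inE ltnS (eqP fx).
  - rewrite szq /= /q take_takel //.
    apply/(all_nthP x) => j; rewrite size_take lt => jlt.
    rewrite nth_take //.
    by have := before_find x jlt; rewrite /P => /negbFE.
  - rewrite sum1_size size_zip.
    change (size (x :: q)) with (size q).+1; rewrite szq.
    move: lt szm; lia.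
rewrite last_cat; apply: connect_trans c1 _.
apply: IH => //.
- rewrite /p2 size_drop.
  move: szp; rewrite -/p; lia.
- by move: fl; rewrite ep last_cat.
- rewrite size_drop; move: szm; rewrite -/p; lia.
Qed.

Lemma restr_sym (h : {set 'I_n}) : symmetric (restr_rel e h).
Proof. by move=> u v; rewrite /restr_rel andbCA e_sym. Qed.

Lemma path_conn (h : {set 'I_n}) : forall p x, path e x p ->
  all (fun z => z \in h) (x :: p) ->
  forall z, z \in x :: p -> connect (restr_rel e h) x z.
Proof.
elim=> [|y p IH] x /=.
  by move=> _ _ z; rewrite inE => /eqP ->; apply: connect0.
move=> /andP [exy pp] /and3P [xh yh ap] z; rewrite inE => /orP [/eqP ->|zin].
  exact: connect0.
apply: connect_trans (connect1 _) (IH y pp _ z zin).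
  by rewrite /restr_rel xh yh exy.
by rewrite /= yh ap.
Qed.

Lemma restr_all (h : {set 'I_n}) : forall p x, path (restr_rel e h) x p ->
  all (fun z => z \in h) p.
Proof.
elim=> [|y p IH] x //= /andP [/and3P [_ yh _] pp].
by rewrite yh (IH y pp).
Qed.

Notation Hc := (hcontr_flag (Hm e m) f).

Lemma hadj_conn x y : hadj Hc x y ->
  val (f x) = val (f y) /\ connect (rr (f x)) x y.
Proof.
case/existsP => h' /andP [hin /andP [xh yh]].
case/imset2P: hin => h i hH; rewrite inE => /andP [_ /andP [_ hsub]] eh.
subst h'.
have fxi : val (f x) == i.
  by rewrite -inB !inE in xh *; case/andP: xh => -> /(subsetP hsub); rewrite inE.
have fyi : val (f y) == i.
  by rewrite -inB !inE in yh *; case/andP: yh => -> /(subsetP hsub); rewrite inE.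
split; first by rewrite (eqP fxi) (eqP fyi).
rewrite (eqP fxi).
move: hH; rewrite inE => /andP [cardh /andP [_ /forallP hc]].
have xh' : x \in h by case/setDP: xh.
have yh' : y \in h by case/setDP: yh.
move: (hc x); rewrite xh' /= => /forallP /(_ y); rewrite yh' /=.
case/connectP => p pth ey; rewrite ey.
case: (shortenP pth) ey => p' pth' uq _ ey.
have ap := @restr_all h _ _ pth'.
apply: seg.
- by apply: sub_path pth' => a b /and3P [].
- by rewrite -(eqP fxi).
- apply/allP => z /(allP ap) zh.
  by have := subsetP hsub z zh.
- by rewrite -ey.
- have : (size (x :: p') <= #|h|)%N.
    move/card_uniqP: uq => <-; apply: subset_leq_card; apply/subsetP => z.
    by rewrite inE => /orP [/eqP ->|/(allP ap)].
  by move: cardh => /= ; lia.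
Qed.

Lemma rr_hadj x y : rr (f x) x y -> hadj Hc x y.
Proof.
move/asboolP => [xB yB _ [p [/andP [pn pth] ly ap ag sm]]].
pose h := [set z in x :: p].
have szp : (size p <= m)%N.
  move: sm; rewrite sum1_size size_zip.
  change (size (x :: p)) with (size p).+1; lia.
have hH : h \in Hm e m.
  rewrite inE; apply/andP; split.
    by rewrite cardsE; apply: leq_trans (card_size _) _.
  apply/andP; split.
    by apply/set0Pn; exists x; rewrite inE mem_head.
  have ah : all (fun z => z \in h) (x :: p) by apply/allP => z zin; rewrite inE.
  apply/forallP => a; apply/implyP => ah'; apply/forallP => b; apply/implyP => bh.
  rewrite inE in ah' bh.
  move: bh; rewrite /h inE => bh.
  apply: connect_trans (@path_conn h _ _ pth ah b bh).
  rewrite (sym_connect_sym (restr_sym h)).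
  exact: (@path_conn h _ _ pth ah a ah').
apply/existsP; exists (h :\: flagset f (f x)); apply/andP; split.
  apply/imset2P; apply: (Imset2spec (x1 := h) (x2 := f x)) => //.
  rewrite !inE flag_lt /=.
  apply/subsetP => z; rewrite inE => /(allP ap).
  by [].
have yh : y \in h by rewrite inE -ly mem_last.
have xh : x \in h by rewrite inE mem_head.
move: xB yB; rewrite !in_setD => /andP [-> _] /andP [-> _].
by rewrite xh yh.
Qed.

Lemma conn_eq u v : connect (hadj Hc) u v = connect (rr (f u)) u v.
Proof.
apply/idP/idP.
  case/connectP => p; elim: p u => [|y p IH] u /=.
    by move=> _ ->; apply: connect0.
  move=> /andP [/hadj_conn [fuy c] pp] ev.
  apply: connect_trans c _.
  by rewrite fuy; apply: IH pp ev.
apply: connect_sub => a b rab.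
apply: connect1; apply: rr_hadj.
have : val (f a) = val (f u).
  move/asboolP: rab => [aB _ _ _].
  by move: aB; rewrite inB => /eqP.
by move=> ->.
Qed.
End S.

Lemma count_comp n (K : 'I_n -> {set 'I_n}) (g : 'I_n -> 'I_n) (nb : nat)
  (Kin : forall u, u \in K u) (Kg : forall u v, v \in K u -> g v = g u)
  (glt : forall u, (g u < nb)%N) :
  #|[set K u | u : 'I_n]| = (\sum_(i < n | (i < nb)%N) #|[set K u | u in [set v | g v == i]]|)%N.
Proof.
set S0 := [set K u | u : 'I_n].
set S := fun i : 'I_n => [set K u | u in [set v | g v == i]].
rewrite -sum1_card.
transitivity (\sum_(C in S0) \sum_(i < n | (i < nb)%N) ((C \in S i) : nat))%N.
  apply: eq_bigr => C /imsetP [u _ ->].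
  rewrite (bigD1 (g u)) //=.
  have -> : K u \in S (g u) by apply: imset_f; rewrite inE.
  rewrite big1 // => i /andP [_ ne].
  apply/eqP; rewrite eqb0; apply/negP => /imsetP [u' u'in eK].
  move: u'in; rewrite inE => /eqP gu'.
  have : u \in K u' by rewrite -eK.
  move/Kg; rewrite gu' => giu.
  by move: ne; rewrite giu eqxx.
rewrite exchange_big; apply: eq_bigr => i _.
transitivity (\sum_(C | (C \in S0) && (C \in S i)) 1)%N.
  by rewrite big_mkcondr; apply: eq_bigr => C _; case: (C \in S i).
rewrite sum1dep_card; apply: eq_card => C; rewrite inE.
apply/andb_idl => /imsetP [u _ ->]; exact: imset_f.
Qed.

Lemma key n m (e : rel 'I_n) (e_sym : symmetric e) (e_irr : irreflexive e)
  (f : {ffun 'I_n -> 'I_n}) (fF : is_flag f) :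
  hrk (Hm e m) f = rk_m e (fun _ _ => 1%N) m f.
Proof.
rewrite /hrk /rk_m; congr (n - _)%N.
rewrite /hyp_ncomp.
have -> : [set [set v | connect (hadj (hcontr_flag (Hm e m) f)) u v] | u : 'I_n]
   = [set [set v | connect (@rr n m e f (f u)) u v] | u : 'I_n].
  apply: eq_imset => u; apply/setP => v; rewrite !inE.
  exact: conn_eq.
rewrite (@count_comp n (fun u => [set v | connect (@rr n m e f (f u)) u v]) f (nblocks f)).
- apply: eq_bigr => i _; rewrite /ncomp_on.
  have -> : flagset f i.+1 :\: flagset f i = [set v | f v == i].
    by apply/setP => v; rewrite inB inE.
  apply: eq_card => C; apply/imsetP/imsetP => -[u ui ->]; exists u => //; move: ui; rewrite inE => /eqP <-.
  1,2: by rewrite /rr.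
- by move=> u; rewrite inE; apply: connect0.
- move=> u v; rewrite inE => /connectP [p pth ev].
  apply: val_inj; apply/eqP.
  suff H : forall x, val (f x) == val (f u) -> path (@rr n m e f (f u)) x p ->
      v = last x p -> val (f v) == val (f u) by exact: H.
  elim: p {pth ev} => [|y p IH] x /=; first by move=> fx _ ->.
  move=> fx /andP [rxy pp] ev'.
  have fy : val (f y) == val (f u).
    by move/asboolP: rxy => [_ yB _ _]; rewrite inB in yB.
  exact: IH fy pp ev'.
- by move=> u; apply: flag_lt.
Qed.

Theorem mainTheorem2 (n m : nat) (e : rel 'I_n)
  (e_sym : symmetric e) (e_irr : irreflexive e) :
  Fq_graph e m =1 Psi e (fun _ _ => 1%N) m.
Proof.
move=> alpha; rewrite /Fq_graph /Fq_hyp /Psi.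
apply: eq_bigr => f /andP [fF _].
by rewrite (@key n m e e_sym e_irr f fF).
Qed.
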